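(* Let $n$ be a positive integer and let $\Omega_1,\Omega_2$ be two distinct copies of $2^{[n]}$. For $i=1,2$ let $\bm{p}_i=(p_i^{(1)},\dots,p_i^{(n)})$ be a probability vector (i.e. $0<p_i^{(\ell)}<1$ for all $\ell$), write $p_i:=p_i^{(1)}$, and let $\mu_i$ be the product measure on $\Omega_i$ given by $$\mu_i(U)=\sum_{x\in U}\prod_{\ell\in x}p_i^{(\ell)}\prod_{k\in[n]\setminus x}(1-p_i^{(k)})\qquad (U\subset\Omega_i).$$ Assume that $p_1p_2=\max\{p_1^{(\ell)}p_2^{(\ell)}:\ell\in[n]\}$ and that $p_1^{(\ell)},p_2^{(\ell)}\leqslant 1/3$ for all $\ell\in[n]$. If $U_1\subset\Omega_1$ and $U_2\subset\Omega_2$ are cross-intersecting (i.e. $x\cap y\neq\emptyset$ for all $x\in U_1$, $y\in U_2$), then $\mu_1(U_1)\mu_2(U_2)\leqslant p_1p_2$. Moreover, with $w:=\{\ell\in[n]:p_1^{(\ell)}p_2^{(\ell)}=p_1p_2\}$ and $U_i^{(\ell)}:=\{x\in\Omega_i:\ell\in x\}$, equality holds if and only if $U_1=U_1^{(\ell)}$ and $U_2=U_2^{(\ell)}$ for some $\ell\in w$.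
   Context: A probability vector is a vector $\bm{p}=(p^{(1)},\dots,p^{(n)})$ with $0<p^{(\ell)}<1$ for every $\ell$. *)

(* Defs.v *)
From mathcomp Require Import all_boot all_order all_algebra.
Set Implicit Arguments. Unset Strict Implicit. Unset Printing Implicit Defensive.
Import Order.TTheory GRing.Theory Num.Theory.
Local Open Scope ring_scope.

Definition prob_vector (R : realFieldType) (n : nat) (p : 'I_n -> R) : Prop :=
  forall l, 0 < p l /\ p l < 1.

Definition prod_measure (R : realFieldType) (n : nat) (p : 'I_n -> R)
    (U : {set {set 'I_n}}) : R :=
  \sum_(x in U) ((\prod_(l in x) p l) * \prod_(k in ~: x) (1 - p k)).

Definition cross_intersecting (n : nat) (U1 U2 : {set {set 'I_n}}) : Prop :=
  forall x y, x \in U1 -> y \in U2 -> x :&: y != set0.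

Definition star (n : nat) (l : 'I_n) : {set {set 'I_n}} := [set x : {set 'I_n} | l \in x].

(* Main.v *)
Require Import Defs.
From mathcomp Require Import all_boot all_order all_algebra.
From mathcomp Require Import ring lra.
Set Implicit Arguments. Unset Strict Implicit. Unset Printing Implicit Defensive.
Import Order.TTheory GRing.Theory Num.Theory.
Local Open Scope ring_scope.

Section RealAll.
Variable R : realFieldType.

Definition Kc (X Y x1 y1 : R) : Prop := (x1 <= X /\ y1 <= Y) \/ (X = 0 /\ Y = 0).

Lemma ab_ineq (M a b : R) : 0 < M -> 9*M <= 1 -> 0 <= a -> 3*a <= 1 -> 0 <= b -> 3*b <= 1 ->
  a*b <= M -> a*b*(2-6*M) <= 3*M*((1-a)*(1-b)).
Proof. move=> *. have h: 0 <= (1-3*a)*(1-3*b) by nra. nra. Qed.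

Lemma H2step (M c a b X Y x1 y1 : R) : c = 2 - 9*M ->
  0 < M -> 9*M <= 1 -> 0 <= a -> 3*a <= 1 -> 0 <= b -> 3*b <= 1 -> a*b <= M ->
  0 <= X -> 0 <= Y -> 0 <= x1 -> 0 <= y1 ->
  3*M*(X+Y) + c*X*Y <= 3*M -> 3*M*(X+y1) + c*X*y1 <= 3*M -> 3*M*(x1+Y) + c*x1*Y <= 3*M ->
  3*M*(((1-a)*X + a*x1) + ((1-b)*Y + b*y1)) + c*((1-a)*X + a*x1)*((1-b)*Y + b*y1) <= 3*M /\
  (3*M*(((1-a)*X + a*x1) + ((1-b)*Y + b*y1)) + c*((1-a)*X + a*x1)*((1-b)*Y + b*y1) = 3*M ->
    Kc X Y x1 y1).
Proof.
rewrite /Kc => hc hM hM9 ha ha3 hb hb3 hab hX hY hx1 hy1 h00 hA hB.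
have hc1 : 1 <= c by lra.
pose s := 3*M + c*X. pose t := 3*M + c*Y.
pose K0 := 3*M*(3*M+c).
have hs : 3*M <= s by rewrite /s; nra.
have ht : 3*M <= t by rewrite /t; nra.
have hst : 9*M^+2 <= s*t by nra.
have hPi : s*t <= K0.
  have -> : s*t = 9*M^+2 + c*(3*M*(X+Y) + c*X*Y) by rewrite /s /t; ring.
  have : c * (3*M*(X+Y) + c*X*Y) <= c*(3*M) by apply: ler_wpM2l; lra.
  rewrite /K0; lra.
have hPB : (3*M + c*x1) * t <= K0.
  have -> : (3*M + c*x1)*t = 9*M^+2 + c*(3*M*(x1+Y) + c*x1*Y) by rewrite /t; ring.
  have : c * (3*M*(x1+Y) + c*x1*Y) <= c*(3*M) by apply: ler_wpM2l; lra.
  rewrite /K0; lra.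
have hPA : s * (3*M + c*y1) <= K0.
  have -> : s*(3*M + c*y1) = 9*M^+2 + c*(3*M*(X+y1) + c*X*y1) by rewrite /s; ring.
  have : c * (3*M*(X+y1) + c*X*y1) <= c*(3*M) by apply: ler_wpM2l; lra.
  rewrite /K0; lra.
pose z := (1-a)*X + a*x1. pose w := (1-b)*Y + b*y1.
rewrite -/z -/w.
have eqz : 3*M + c*z = (1-a)*s + a*(3*M+c*x1) by rewrite /z /s; ring.
have eqw : 3*M + c*w = (1-b)*t + b*(3*M+c*y1) by rewrite /w /t; ring.
have h1 : t*(3*M+c*z) <= (1-a)*(s*t) + a*K0.
  rewrite eqz. have -> : t * ((1 - a) * s + a * (3 * M + c * x1)) = (1-a)*(s*t) + a*((3 * M + c * x1)*t) by ring.
  have : a*((3 * M + c * x1)*t) <= a*K0 by apply: ler_wpM2l; lra.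
  lra.
have h2 : s*(3*M+c*w) <= (1-b)*(s*t) + b*K0.
  rewrite eqw. have -> : s * ((1 - b) * t + b * (3 * M + c * y1)) = (1-b)*(s*t) + b*(s*(3 * M + c * y1)) by ring.
  have : b*(s*(3 * M + c * y1)) <= b*K0 by apply: ler_wpM2l; lra.
  lra.
have hz : 0 <= z by rewrite /z; apply: addr_ge0; apply: mulr_ge0; lra.
have hw : 0 <= w by rewrite /w; apply: addr_ge0; apply: mulr_ge0; lra.
have hz0 : 0 <= 3*M + c*z by have := mulr_ge0 (ltW (lt_le_trans ltr01 hc1)) hz; lra.
have hw0 : 0 <= 3*M + c*w by have := mulr_ge0 (ltW (lt_le_trans ltr01 hc1)) hw; lra.
have habK : a*b*K0 <= (1-a)*(1-b)*(9*M^+2).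
  have := ab_ineq hM hM9 ha ha3 hb hb3 hab.
  have -> : K0 = 3*M*(2 - 6*M) by rewrite /K0 hc; ring.
  move=> h. nra.
have key : ((1-a)*(s*t) + a*K0)*((1-b)*(s*t) + b*K0) - K0*(s*t)
   = ((1-a)*(1-b)*(s*t) - a*b*K0)*((s*t) - K0) by ring.
have hprod : (s*t)*((3*M+c*z)*(3*M+c*w)) <= ((1-a)*(s*t) + a*K0)*((1-b)*(s*t) + b*K0).
  have -> : (s*t)*((3*M+c*z)*(3*M+c*w)) = (t*(3*M+c*z))*(s*(3*M+c*w)) by ring.
  apply: ler_pM => //; nra.
have hab4 : 0 <= (1-a)*(1-b) by nra.
have hneg : ((1-a)*(1-b)*(s*t) - a*b*K0)*((s*t) - K0) <= 0.
  apply: mulr_ge0_le0; nra.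
have hpos : 0 < s*t by nra.
have hPP : (3*M+c*z)*(3*M+c*w) <= K0.
  have : (s*t)*((3*M+c*z)*(3*M+c*w)) <= (s*t) * K0 by lra.
  rewrite ler_pM2l //.
have eqL : (3*M+c*z)*(3*M+c*w) = 9*M^+2 + c*(3*M*(z+w) + c*z*w) by ring.
have hK0 : K0 = 9*M^+2 + c*(3*M) by rewrite /K0; ring.
split.
  have : c*(3*M*(z+w) + c*z*w) <= c*(3*M) by lra.
  rewrite ler_pM2l //; lra.
move=> hEq.
have hPPe : (3*M+c*z)*(3*M+c*w) = K0 by rewrite eqL hEq hK0.
have hzero : ((1-a)*(1-b)*(s*t) - a*b*K0)*((s*t) - K0) = 0.
  rewrite -key. apply/eqP; rewrite eq_le; apply/andP; split; last first.
    rewrite subr_ge0; move: hprod; rewrite hPPe; lra.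
  lra.
move/eqP: hzero; rewrite mulf_eq0 => /orP [/eqP h | /eqP h].
- right.
  have hst9 : s*t = 9*M^+2.
    have : (1-a)*(1-b)*(s*t - 9*M^+2) <= 0 by nra.
    have h4 : 4/9 <= (1-a)*(1-b) by nra.
    nra.
  have hs3 : s = 3*M by nra.
  have ht3 : t = 3*M by nra.
  rewrite /s in hs3; rewrite /t in ht3.
  split; nra.
- left. have e1 : s*t = K0 by lra.
  rewrite /s /t hK0 in e1.
  have e2 : (3*M + c*Y)*(3*M*(X+Y) + c*X*Y - 3*M) = 0 by nra.
  split.
  + have : x1 * (3*M + c*Y) <= X*(3*M + c*Y) by nra.
    rewrite ler_pM2r //; nra.
  + have : y1 * (3*M + c*X) <= Y*(3*M + c*X) by nra.
    rewrite ler_pM2r //; nra.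
Qed.

Lemma caseI (M a b X Y x1 y1 : R) :
  0 < M -> 9*M <= 1 -> 0 <= a -> 3*a <= 1 -> 0 <= b -> 3*b <= 1 -> a*b <= M ->
  3*M <= X -> 3*M <= Y -> 0 <= x1 -> 0 <= y1 -> X*Y <= M ->
  X*y1 <= M -> x1*Y <= M ->
  ((1-a)*X + a*x1)*((1-b)*Y + b*y1) <= M /\
  (((1-a)*X + a*x1)*((1-b)*Y + b*y1) = M -> Kc X Y x1 y1).
Proof.
move=> hM hM9 ha ha3 hb hb3 hab hX hY hx1 hy1 h00 hA hB.
pose z := (1-a)*X + a*x1. pose w := (1-b)*Y + b*y1. rewrite -/z -/w.
pose r := X*Y.
have hr9 : 9*M^+2 <= r by rewrite /r; nra.
have hz : 0 <= z by rewrite /z; apply: addr_ge0; apply: mulr_ge0; lra.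
have hw : 0 <= w by rewrite /w; apply: addr_ge0; apply: mulr_ge0; lra.
have h1 : z*Y <= (1-a)*r + a*M.
  have -> : z*Y = (1-a)*r + a*(x1*Y) by rewrite /z /r; ring.
  have : a*(x1*Y) <= a*M by apply: ler_wpM2l.
  lra.
have h2 : w*X <= (1-b)*r + b*M.
  have -> : w*X = (1-b)*r + b*(X*y1) by rewrite /w /r; ring.
  have : b*(X*y1) <= b*M by apply: ler_wpM2l.
  lra.
have hprod : (z*w)*r <= ((1-a)*r + a*M)*((1-b)*r + b*M).
  have -> : (z*w)*r = (z*Y)*(w*X) by rewrite /r; ring.
  apply: ler_pM; [apply: mulr_ge0; lra | apply: mulr_ge0; lra | exact: h1 | exact: h2].
have h4 : 4/9 <= (1-a)*(1-b) by nra.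
have hf : 0 < (1-a)*(1-b)*r - a*b*M.
  have : a*b*M <= M^+2 by rewrite expr2; apply: ler_wpM2r; lra.
  have : 4/9*(9*M^+2) <= (1-a)*(1-b)*r by apply: ler_pM; [lra | nra | lra | lra].
  have : 0 < M^+2 by apply: exprn_gt0.
  lra.
have key : ((1-a)*r + a*M)*((1-b)*r + b*M) - M*r = ((1-a)*(1-b)*r - a*b*M)*(r - M) by ring.
have hrM : r <= M by [].
have hneg : ((1-a)*(1-b)*r - a*b*M)*(r - M) <= 0 by apply: mulr_ge0_le0; lra.
have hrpos : 0 < r by nra.
split.
  have : (z*w)*r <= M*r by lra.
  by rewrite ler_pM2r.
move=> hE. left.
have : 0 <= ((1-a)*(1-b)*r - a*b*M)*(r - M) by rewrite -key; move: hprod; rewrite hE; lra.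
rewrite pmulr_rge0 // subr_ge0 => hrM2.
have erM : X*Y = M by rewrite -/r; lra.
have hXp : 0 < X by nra.
have hYp : 0 < Y by nra.
split.
- have : x1*Y <= X*Y by lra.
  by rewrite ler_pM2r.
- have : y1*X <= Y*X by lra.
  by rewrite ler_pM2r.
Qed.

Lemma caseII (M c a b X Y x1 y1 : R) : c = 2 - 9*M ->
  0 < M -> 9*M <= 1 -> 0 <= a -> 3*a <= 1 -> 0 <= b -> 3*b <= 1 -> a*b <= M ->
  0 <= X -> X <= 3*M -> 3*M <= Y -> 3*Y <= 1 -> 0 <= x1 -> 0 <= y1 ->
  3*M*(X+y1) + c*X*y1 <= 3*M -> x1*Y <= M ->
  ((1-a)*X + a*x1)*((1-b)*Y + b*y1) <= M /\
  (((1-a)*X + a*x1)*((1-b)*Y + b*y1) = M -> Kc X Y x1 y1).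
Proof.
move=> hc hM hM9 ha ha3 hb hb3 hab hX hX3 hY hY3 hx1 hy1 hA hB.
have hc1 : 1 <= c by lra.
pose z := (1-a)*X + a*x1. pose w := (1-b)*Y + b*y1. rewrite -/z -/w.
pose s := 3*M + c*X.
have hs : 3*M <= s by rewrite /s; nra.
have hz : 0 <= z by rewrite /z; apply: addr_ge0; apply: mulr_ge0; lra.
have hw : 0 <= w by rewrite /w; apply: addr_ge0; apply: mulr_ge0; lra.
have h1 : z*Y <= (1-a)*(X*Y) + a*M.
  have -> : z*Y = (1-a)*(X*Y) + a*(x1*Y) by rewrite /z; ring.
  have : a*(x1*Y) <= a*M by apply: ler_wpM2l.
  lra.
have hy1s : y1*s <= 3*M*(1-X) by rewrite /s; lra.
have h2 : w*s <= (1-b)*(Y*s) + 3*M*b*(1-X).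
  have -> : w*s = (1-b)*(Y*s) + b*(y1*s) by rewrite /w; ring.
  have : b*(y1*s) <= b*(3*M*(1-X)) by apply: ler_wpM2l.
  lra.
have hXY : X*Y <= M.
  have : X*Y <= 3*M*Y by apply: ler_wpM2r; lra.
  have : M*(3*Y) <= M*1 by apply: ler_wpM2l; lra.
  lra.
have hprod : (z*w)*(Y*s) <= ((1-a)*(X*Y) + a*M)*((1-b)*(Y*s) + 3*M*b*(1-X)).
  have -> : (z*w)*(Y*s) = (z*Y)*(w*s) by ring.
  apply: ler_pM; [apply: mulr_ge0; lra | apply: mulr_ge0; lra | exact: h1 | exact: h2].
have key : M*(Y*s) - ((1-a)*(X*Y) + a*M)*((1-b)*(Y*s) + 3*M*b*(1-X))
   = (M - X*Y)*((1-a)*(1-b)*(Y*s) - 3*M*a*b*(1-X)) + b*Y*M*((3*X-1)*(X-3*M)).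
  by rewrite /s hc; ring.
have h4 : 4/9 <= (1-a)*(1-b) by nra.
have hYs : 9*M^+2 <= Y*s by nra.
have hf : 0 < (1-a)*(1-b)*(Y*s) - 3*M*a*b*(1-X).
  have : 3*M*a*b*(1-X) <= 3*M*M.
    have hh : a*b*(1-X) <= M.
      have : a*b*(1-X) <= a*b by rewrite -[X in _ <= X]mulr1; apply: ler_wpM2l; nra.
      lra.
    have : (3*M)*(a*b*(1-X)) <= (3*M)*M by apply: ler_wpM2l; lra.
    lra.
  have : 4/9*(9*M^+2) <= (1-a)*(1-b)*(Y*s) by apply: ler_pM; [lra | nra | lra | lra].
  have : 0 < M^+2 by apply: exprn_gt0.
  rewrite expr2; lra.
have hq : 0 <= (3*X-1)*(X-3*M) by nra.
have hq2 : 0 <= b*Y*M*((3*X-1)*(X-3*M)) by apply: mulr_ge0 => //; apply: mulr_ge0; nra.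
have hT1 : 0 <= (M - X*Y)*((1-a)*(1-b)*(Y*s) - 3*M*a*b*(1-X)) by apply: mulr_ge0; lra.
have hYspos : 0 < Y*s by nra.
split.
  have : (z*w)*(Y*s) <= M*(Y*s) by lra.
  by rewrite ler_pM2r.
move=> hE. left.
have hT0 : (M - X*Y)*((1-a)*(1-b)*(Y*s) - 3*M*a*b*(1-X)) = 0.
  move: hprod; rewrite hE; lra.
move/eqP: hT0; rewrite mulf_eq0 => /orP [/eqP h | /eqP h]; last by lra.
have eY : Y = 1/3 by nra.
have eX : X = 3*M by nra.
split.
- have : x1*Y <= X*Y by lra.
  have hYp : 0 < Y by lra.
  by rewrite ler_pM2r.
- have hsp : 0 < s by lra.
  have : y1*s <= Y*s by rewrite /s eY eX hc; move: hy1s; rewrite /s eX hc; nra.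
  by rewrite ler_pM2r.
Qed.

Lemma GA_lemma (M c X Y : R) : c = 2 - 9*M -> 0 < M -> 9*M <= 1 ->
  0 <= X -> X <= 3*M -> 0 <= Y -> Y <= 3*M ->
  let k := 3*M - 3*M*(X+Y) - c*X*Y in
  (X*(3*M+c*Y) + k/3)*(Y*(3*M+c*X) + 3*M*k) <= M*(3*M+c*X)*(3*M+c*Y) /\
  ((X*(3*M+c*Y) + k/3)*(Y*(3*M+c*X) + 3*M*k) = M*(3*M+c*X)*(3*M+c*Y) ->
   (X = 0 /\ Y = 0) \/ (X = 3*M /\ Y = 3*M /\ 9*M = 1)).
Proof.
move=> hc hM hM9 hX hX3 hY hY3 k.
have hc0 : 0 <= c by lra.
pose q := 5 - 51*M + 153*M^+2 - 162*M^+3.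
have hq : 0 < q.
  have hM3 : M^+3 <= M^+2 / 9.
    have -> : M^+3 = M * M^+2 by rewrite exprS.
    have : 0 <= M^+2 by apply: sqr_ge0.
    nra.
  rewrite /q.
  have : 0 < 5 - 51*M + 135*M^+2 by nra.
  lra.
pose T1 := 18*M^+3*(X-Y)^+2.
pose T2 := 3*M^+2*(1-9*M)*Y^+2.
pose T3 := 2*M*(1-6*M)*(X*(3*M-Y)).
pose T4 := M*(1-3*M)*(Y*(3*M-X)).
pose T5 := M*(1-9*M)*q*(X*Y).
pose T6 := M*c*(1-3*M)*(X*Y*(3*M-Y)).
pose T7 := 2*M*c*(1-6*M)*(X*Y*(3*M-X)).
pose T8 := 2/3*c^+2*(1-3*M)*(X*Y*(9*M^+2-X*Y)).
have hid : M*(3*M+c*X)*(3*M+c*Y) - (X*(3*M+c*Y) + k/3)*(Y*(3*M+c*X) + 3*M*k)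
   = T1 + T2 + T3 + T4 + T5 + T6 + T7 + T8.
  by rewrite /T1 /T2 /T3 /T4 /T5 /T6 /T7 /T8 /q /k hc; field.
have hXY0 : 0 <= X*Y by apply: mulr_ge0.
have hXY9 : X*Y <= 9*M^+2.
  have : X*Y <= (3*M)*(3*M) by apply: ler_pM.
  rewrite -expr2 => h; lra.
have p1 : 0 <= T1 by rewrite /T1; apply: mulr_ge0; [apply: mulr_ge0; [lra|apply: exprn_ge0; lra] | apply: sqr_ge0].
have p2 : 0 <= T2 by rewrite /T2; apply: mulr_ge0; [apply: mulr_ge0; [apply: mulr_ge0; [lra|apply: sqr_ge0]|lra] | apply: sqr_ge0].
have p3 : 0 <= T3 by rewrite /T3; apply: mulr_ge0; [apply: mulr_ge0; lra | apply: mulr_ge0; lra].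
have p4 : 0 <= T4 by rewrite /T4; apply: mulr_ge0; [apply: mulr_ge0; lra | apply: mulr_ge0; lra].
have p5 : 0 <= T5 by rewrite /T5; apply: mulr_ge0 => //; apply: mulr_ge0; [apply: mulr_ge0; lra | lra].
have p6 : 0 <= T6 by rewrite /T6; apply: mulr_ge0; [apply: mulr_ge0; [apply: mulr_ge0|]; lra | apply: mulr_ge0 => //; lra].
have p7 : 0 <= T7 by rewrite /T7; apply: mulr_ge0; [apply: mulr_ge0; [apply: mulr_ge0; [apply: mulr_ge0|]|]; lra | apply: mulr_ge0 => //; lra].
have p8 : 0 <= T8 by rewrite /T8; apply: mulr_ge0; [apply: mulr_ge0; [apply: mulr_ge0; [lra|apply: sqr_ge0]|lra] | apply: mulr_ge0 => //; lra].
split; first by lra.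
move=> hE.
have hT3 : T3 = 0 by lra.
have hT4 : T4 = 0 by lra.
have hT5 : T5 = 0 by lra.
have nz1 : 2*M*(1-6*M) != 0 by apply/eqP; nra.
have nz2 : M*(1-3*M) != 0 by apply/eqP; nra.
move: hT3; rewrite /T3 => /eqP; rewrite mulf_eq0 (negbTE nz1) /= mulf_eq0 => /orP [/eqP hX0|/eqP hY3'].
- move: hT4; rewrite /T4 => /eqP; rewrite mulf_eq0 (negbTE nz2) /= mulf_eq0 => /orP [/eqP hY0|/eqP h].
  + by left.
  + exfalso; lra.
- move: hT4; rewrite /T4 => /eqP; rewrite mulf_eq0 (negbTE nz2) /= mulf_eq0 => /orP [/eqP hY0|/eqP h].
  + exfalso; lra.
  + right. have eX : X = 3*M by lra.
    have eY : Y = 3*M by lra.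
    split => //; split => //.
    have hpos : 0 < M*q*(X*Y) by rewrite eX eY; apply: mulr_gt0; [apply: mulr_gt0 => //| apply: mulr_gt0; lra].
    have : (1 - 9*M) * (M*q*(X*Y)) = 0 by rewrite -hT5 /T5; ring.
    move/eqP; rewrite mulf_eq0 => /orP [/eqP h1|/eqP h1]; lra.
Qed.

Lemma caseIII (M c a b X Y x1 y1 : R) : c = 2 - 9*M ->
  0 < M -> 9*M <= 1 -> 0 <= a -> 3*a <= 1 -> 0 <= b -> 3*b <= 1 ->
  0 <= X -> X <= 3*M -> 1 <= 3*Y -> 0 <= x1 -> 0 <= y1 ->
  3*M*(x1+Y) + c*x1*Y <= 3*M ->
  let z := (1-a)*X + a*x1 in let w := (1-b)*Y + b*y1 in
  3*M*(z + w) + c*z*w <= 3*M ->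
  (3*M*(z + w) + c*z*w = 3*M -> Kc X Y x1 y1) ->
  z*w <= M /\ (z*w = M -> Kc X Y x1 y1).
Proof.
move=> hc hM hM9 ha ha3 hb hb3 hX hX3 hY hx1 hy1 hB z w hL hLe.
have hc1 : 1 <= c by lra.
have hx13 : x1 <= 3*M.
  have h1 : x1*(3*M + c*Y) <= 3*M*(1-Y) by lra.
  have h2 : 3*M*(1-Y) <= 3*M*(3*M + c*Y).
    apply: ler_wpM2l; first lra.
    have : 0 <= (3*Y-1)*(1-3*M) by apply: mulr_ge0; lra.
    rewrite hc; lra.
  have hp : 0 < 3*M + c*Y by nra.
  have : x1*(3*M + c*Y) <= (3*M)*(3*M + c*Y) by lra.
  by rewrite ler_pM2r.
have hz : 0 <= z by rewrite /z; apply: addr_ge0; apply: mulr_ge0; lra.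
have hw : 0 <= w by rewrite /w; apply: addr_ge0; apply: mulr_ge0; lra.
have hz3 : z <= 3*M.
  rewrite /z. have : a*x1 <= a*(3*M) by apply: ler_wpM2l.
  have : (1-a)*X <= (1-a)*(3*M) by apply: ler_wpM2l; lra.
  lra.
have hpz : 0 < 3*M + c*z by nra.
have hw1 : w*(3*M + c*z) <= 3*M*(1-z) by lra.
have hq : 3*M*z*(1-z) <= M*(3*M + c*z).
  have : 0 <= (1 - 3*z)*(3*M - z) by apply: mulr_ge0; lra.
  rewrite hc; nra.
have hzw : (z*w)*(3*M + c*z) <= 3*M*z*(1-z).
  have -> : (z*w)*(3*M + c*z) = z*(w*(3*M + c*z)) by ring.
  have : z*(w*(3*M + c*z)) <= z*(3*M*(1-z)) by apply: ler_wpM2l.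
  lra.
split.
  have : (z*w)*(3*M + c*z) <= M*(3*M+c*z) by lra.
  by rewrite ler_pM2r.
move=> hE. apply: hLe.
have hzp : 0 < z.
  rewrite lt_neqAle hz andbT; apply/eqP => hz0. move: hE; rewrite -hz0 mul0r; lra.
have e1 : z*(w*(3*M + c*z)) = z*(3*M*(1-z)).
  have -> : z*(w*(3*M + c*z)) = (z*w)*(3*M + c*z) by ring.
  rewrite hE; apply/eqP; rewrite eq_le; apply/andP; split; first by move: hzw; rewrite hE; lra.
  lra.
have e2 : w*(3*M + c*z) = 3*M*(1-z) by apply: (mulfI (lt0r_neq0 hzp)).
lra.
Qed.

Lemma convex_corner (A B M a : R) : 0 < M -> 9*M <= 1 -> 0 <= A -> 0 <= B ->
  3*M <= a -> 3*a <= 1 ->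
  a*a*B + M*A <= a*(3*M*B + A/3) \/ a*a*B + M*A <= a*(B/3 + 3*M*A).
Proof.
move=> hM hM9 hA hB ha ha3.
case: (lerP (3*a*B) A) => h.
- left. suff : 0 <= a*(3*M*B + A/3) - (a*a*B + M*A) by lra.
  have -> : a*(3*M*B + A/3) - (a*a*B + M*A) = (a - 3*M)*(A/3 - a*B) by field.
  apply: mulr_ge0; lra.
- right. suff : 0 <= a*(B/3 + 3*M*A) - (a*a*B + M*A) by lra.
  have -> : a*(B/3 + 3*M*A) - (a*a*B + M*A) = (1/3 - a)*(a*B - 3*M*A) by field.
  apply: mulr_ge0; first lra.
  have : 3*M*A <= A/3 by nra.
  lra.
Qed.

Lemma caseIV (M c a b X Y x1 y1 : R) : c = 2 - 9*M ->
  0 < M -> 9*M <= 1 -> 0 <= a -> 3*a <= 1 -> 0 <= b -> 3*b <= 1 -> a*b <= M ->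
  0 <= X -> X <= 3*M -> 0 <= Y -> Y <= 3*M -> 0 <= x1 -> 0 <= y1 ->
  3*M*(X+Y) + c*X*Y <= 3*M ->
  3*M*(X+y1) + c*X*y1 <= 3*M -> 3*M*(x1+Y) + c*x1*Y <= 3*M ->
  ((1-a)*X + a*x1)*((1-b)*Y + b*y1) <= M /\
  (((1-a)*X + a*x1)*((1-b)*Y + b*y1) = M -> Kc X Y x1 y1).
Proof.
move=> hc hM hM9 ha ha3 hb hb3 hab hX hX3 hY hY3 hx1 hy1 h00 hA hB.
have hc1 : 1 <= c by lra.
pose z := (1-a)*X + a*x1. pose w := (1-b)*Y + b*y1. rewrite -/z -/w.
pose s := 3*M + c*X. pose t := 3*M + c*Y.
pose k := 3*M - 3*M*(X+Y) - c*X*Y.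
have hk : 0 <= k by rewrite /k; lra.
have hs : 0 < s by rewrite /s; nra.
have ht : 0 < t by rewrite /t; nra.
pose A := X*t. pose B := Y*s.
have hA0 : 0 <= A by rewrite /A; apply: mulr_ge0; lra.
have hB0 : 0 <= B by rewrite /B; apply: mulr_ge0; lra.
have hz : 0 <= z by rewrite /z; apply: addr_ge0; apply: mulr_ge0; lra.
have hw : 0 <= w by rewrite /w; apply: addr_ge0; apply: mulr_ge0; lra.
have hzt : z*t <= A + a*k.
  have hx1t : x1*t <= A + k by rewrite /A /t /k; lra.
  have -> : z*t = (1-a)*A + a*(x1*t) by rewrite /z /A; ring.
  have : a*(x1*t) <= a*(A+k) by apply: ler_wpM2l.
  lra.
have hws : w*s <= B + b*k.
  have hy1s : y1*s <= B + k by rewrite /B /s /k; lra.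
  have -> : w*s = (1-b)*B + b*(y1*s) by rewrite /w /B; ring.
  have : b*(y1*s) <= b*(B+k) by apply: ler_wpM2l.
  lra.
have hN : (z*w)*(s*t) <= (A + a*k)*(B + b*k).
  have -> : (z*w)*(s*t) = (z*t)*(w*s) by ring.
  apply: ler_pM => //; apply: mulr_ge0; lra.
pose N1 := (A + k/3)*(B + 3*M*k).
pose N2 := (A + 3*M*k)*(B + k/3).
have hcorner : (A + a*k)*(B + b*k) <= N1 \/ (A + a*k)*(B + b*k) <= N2.
  case: (lerP a (3*M)) => ha3M.
    right. rewrite /N2. apply: ler_pM; [nra|nra| |]; [have := ler_wpM2r hk ha3M | have : b*k <= k/3 by nra]; lra.
  case: (lerP b (3*M)) => hb3M.
    left. rewrite /N1. apply: ler_pM; [nra|nra| |]; [have : a*k <= k/3 by nra | have := ler_wpM2r hk hb3M]; lra.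
  have hap : 0 < a by lra.
  have haN : a*((A + a*k)*(B + b*k)) <= a*(A*B + M*k^+2) + k*(a*a*B + M*A).
    have h1 : a*(B + b*k) <= a*B + M*k.
      have : (a*b)*k <= M*k by apply: ler_wpM2r.
      have -> : a*(B + b*k) = a*B + (a*b)*k by ring.
      lra.
    have : (A + a*k)*(a*(B+b*k)) <= (A + a*k)*(a*B + M*k).
      apply: ler_wpM2l => //; nra.
    have -> : a*((A + a*k)*(B + b*k)) = (A + a*k)*(a*(B+b*k)) by ring.
    have -> : a*(A*B + M*k^+2) + k*(a*a*B + M*A) = (A + a*k)*(a*B + M*k) by ring.
    done.
  case: (convex_corner hM hM9 hA0 hB0 (ltW ha3M) ha3) => hcc.
  + right.
    have : k*(a*a*B + M*A) <= k*(a*(3*M*B + A/3)) by apply: ler_wpM2l.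
    move=> h2.
    have : a*((A + a*k)*(B + b*k)) <= a*N2.
      have -> : a*N2 = a*(A*B + M*k^+2) + k*(a*(3*M*B + A/3)) by rewrite /N2; field.
      lra.
    by rewrite ler_pM2l.
  + left.
    have : k*(a*a*B + M*A) <= k*(a*(B/3 + 3*M*A)) by apply: ler_wpM2l.
    move=> h2.
    have : a*((A + a*k)*(B + b*k)) <= a*N1.
      have -> : a*N1 = a*(A*B + M*k^+2) + k*(a*(B/3 + 3*M*A)) by rewrite /N1; field.
      lra.
    by rewrite ler_pM2l.
have [hG1 hG1e] := GA_lemma hc hM hM9 hX hX3 hY hY3.
have [hG2 hG2e] := GA_lemma hc hM hM9 hY hY3 hX hX3.
have ek : 3*M - 3*M*(Y+X) - c*Y*X = k by rewrite /k; ring.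
rewrite ek in hG2 hG2e.
rewrite -/k -/s -/t -/A in hG1 hG1e.
have eN1 : N1 = (X * t + k / 3) * (Y * s + 3 * M * k) by rewrite /N1 /A /B.
have eN2 : N2 = (Y * s + k / 3) * (X * t + 3 * M * k) by rewrite /N2 /A /B; ring.
have hst : 0 < s*t by apply: mulr_gt0.
have hM1 : N1 <= M*(s*t) by rewrite eN1 mulrA.
have hM2 : N2 <= M*(s*t).
  rewrite eN2. have -> : M*(s*t) = M*t*s by ring. exact: hG2.
split.
  have : (z*w)*(s*t) <= M*(s*t) by case: hcorner; lra.
  by rewrite ler_pM2r.
move=> hE.
have hfin : N1 = M*(s*t) \/ N2 = M*(s*t).
  case: hcorner => h; [left|right]; move: hN; rewrite hE; lra.
have hXY : (X = 0 /\ Y = 0) \/ (X = 3*M /\ Y = 3*M /\ 9*M = 1).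
  case: hfin => h.
  - apply: hG1e. rewrite -eN1 h; ring.
  - have hh : (Y * (3 * M + c * X) + k / 3) * (X * (3 * M + c * Y) + 3 * M * k) =
               M * (3 * M + c * Y) * (3 * M + c * X).
      rewrite -/s -/t -eN2 h; ring.
    case: (hG2e hh) => [[h1 h2]|[h1 [h2 h3]]]; [by left | by right].
case: hXY => [[hX0 hY0]|[eX [eY e9]]]; first by right.
left.
have hk0 : k = 0 by rewrite /k eX eY hc; nra.
split.
- have hx1t : x1*t <= X*t by rewrite /t /k in hk0 *; nra.
  by rewrite ler_pM2r in hx1t.
- have hy1s : y1*s <= Y*s by rewrite /s /k in hk0 *; nra.
  by rewrite ler_pM2r in hy1s.
Qed.


Definition Rg (M x y : R) : Prop := x*y <= M /\ 3*M*(x+y) + (2-9*M)*x*y <= 3*M.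

Lemma Kc_final (M a b x0 x1 y0 y1 : R) : 0 < M -> 0 < a -> 3*a <= 1 -> 0 < b -> 3*b <= 1 -> a*b <= M ->
  0 <= x0 -> 0 <= x1 -> x1 <= 1 -> 0 <= y0 -> 0 <= y1 -> y1 <= 1 -> x0*y0 <= M ->
  Kc x0 y0 x1 y1 -> ((1-a)*x0 + a*x1)*((1-b)*y0 + b*y1) = M ->
  (x0 = x1 /\ y0 = y1 /\ x0*y0 = M) \/ (x0 = 0 /\ y0 = 0 /\ x1 = 1 /\ y1 = 1 /\ a*b = M).
Proof.
move=> hM ha ha3 hb hb3 hab hx0 hx1 hx11 hy0 hy1 hy11 h00 [[hx hy]|[ex ey]] hE.
- left.
  pose z := (1-a)*x0 + a*x1. pose w := (1-b)*y0 + b*y1. move: hE; rewrite -/z -/w => hE.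
  have hz : 0 <= z by rewrite /z; apply: addr_ge0; apply: mulr_ge0; lra.
  have hw : 0 <= w by rewrite /w; apply: addr_ge0; apply: mulr_ge0; lra.
  have hzx : z <= x0 by rewrite /z; nra.
  have hwy : w <= y0 by rewrite /w; nra.
  have h1 : z*w <= x0*w by apply: ler_wpM2r.
  have h2 : x0*w <= x0*y0 by apply: ler_wpM2l.
  have hwp : 0 < w.
    rewrite lt_neqAle hw andbT; apply/eqP => hw0; move: hE; rewrite -hw0 mulr0; lra.
  have hzp : 0 < z.
    rewrite lt_neqAle hz andbT; apply/eqP => hz0; move: hE; rewrite -hz0 mul0r; lra.
  have hx0p : 0 < x0 by lra.
  have e1 : z = x0.
    have : (x0 - z)*w = 0 by apply/eqP; rewrite eq_le; apply/andP; split; nra.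
    move/eqP; rewrite mulf_eq0 (gt_eqF hwp) orbF subr_eq0 => /eqP; done.
  have e2 : w = y0.
    have : x0*(y0 - w) = 0 by apply/eqP; rewrite eq_le; apply/andP; split; nra.
    move/eqP; rewrite mulf_eq0 (gt_eqF hx0p) /= subr_eq0 => /eqP; done.
  split; last split.
  + have : a*(x0 - x1) = 0 by move: e1; rewrite /z => e1; lra.
    move/eqP; rewrite mulf_eq0 (gt_eqF ha) /= subr_eq0 => /eqP; done.
  + have : b*(y0 - y1) = 0 by move: e2; rewrite /w => e2; lra.
    move/eqP; rewrite mulf_eq0 (gt_eqF hb) /= subr_eq0 => /eqP; done.
  + by rewrite -e1 -e2.
- right. rewrite ex ey in hE *.
  have e : (a*b)*(x1*y1) = M by rewrite -hE; ring.
  have hp : x1*y1 <= 1 by nra.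
  have hab0 : 0 < a*b by apply: mulr_gt0.
  have hxy0 : 0 <= x1*y1 by apply: mulr_ge0.
  have eab : a*b = M.
    have : (a*b)*(x1*y1) <= a*b by rewrite -[X in _ <= X]mulr1; apply: ler_wpM2l; lra.
    lra.
  have exy : x1*y1 = 1.
    have : (a*b)*(x1*y1) = (a*b)*1 by rewrite e eab mulr1.
    by move/(mulfI (lt0r_neq0 hab0)).
  split => //; split => //; split; [nra|split; [nra|done]].
Qed.

Lemma step (M a b x0 x1 y0 y1 : R) :
  0 < M -> 9*M <= 1 -> 0 <= a -> 3*a <= 1 -> 0 <= b -> 3*b <= 1 -> a*b <= M ->
  0 <= x0 -> x0 <= 1 -> 0 <= x1 -> x1 <= 1 -> 0 <= y0 -> y0 <= 1 -> 0 <= y1 -> y1 <= 1 ->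
  Rg M x0 y0 -> Rg M x0 y1 -> Rg M x1 y0 ->
  Rg M ((1-a)*x0 + a*x1) ((1-b)*y0 + b*y1) /\
  (0 < a -> 0 < b -> ((1-a)*x0 + a*x1)*((1-b)*y0 + b*y1) = M ->
   (x0 = x1 /\ y0 = y1 /\ x0*y0 = M) \/ (x0 = 0 /\ y0 = 0 /\ x1 = 1 /\ y1 = 1 /\ a*b = M)).
Proof.
move=> hM hM9 ha ha3 hb hb3 hab hx0 hx01 hx1 hx11 hy0 hy01 hy1 hy11 [h00 h00'] [hA1 hA2] [hB1 hB2].
have hc : 2 - 9*M = 2 - 9*M by [].
have [hL hLe] := H2step hc hM hM9 ha ha3 hb hb3 hab hx0 hy0 hx1 hy1 h00' hA2 hB2.
pose z := (1-a)*x0 + a*x1. pose w := (1-b)*y0 + b*y1.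
rewrite -/z -/w in hL hLe *.
have hLs : 3*M*(w+z) + (2-9*M)*w*z <= 3*M by lra.
have hLse : 3*M*(w+z) + (2-9*M)*w*z = 3*M -> Kc y0 x0 y1 x1.
  move=> h; have : 3*M*(z+w) + (2-9*M)*z*w = 3*M by lra.
  by move/hLe => [[h1 h2]|[h1 h2]]; [left|right].
have swapK : Kc y0 x0 y1 x1 -> Kc x0 y0 x1 y1 by move=> [[h1 h2]|[h1 h2]]; [left|right].
have hB2s : 3*M*(y0+x1) + (2-9*M)*y0*x1 <= 3*M by lra.
have hA2s : 3*M*(y1+x0) + (2-9*M)*y1*x0 <= 3*M by lra.
have h00s : 3*M*(y0+x0) + (2-9*M)*y0*x0 <= 3*M by lra.
have hB1s : y0*x1 <= M by lra.
have hA1s : y1*x0 <= M by lra.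
have h00m : y0*x0 <= M by lra.
have H1 : z*w <= M /\ (z*w = M -> Kc x0 y0 x1 y1).
  case: (lerP x0 (3*M)) => hX3.
  - case: (lerP y0 (3*M)) => hY3.
    + exact: (caseIV hc hM hM9 ha ha3 hb hb3 hab hx0 hX3 hy0 hY3 hx1 hy1 h00' hA2 hB2).
    + case: (lerP (3*y0) 1) => hY13.
      * exact: (caseII hc hM hM9 ha ha3 hb hb3 hab hx0 hX3 (ltW hY3) hY13 hx1 hy1 hA2 hB1).
      * exact: (caseIII hc hM hM9 ha ha3 hb hb3 hx0 hX3 (ltW hY13) hx1 hy1 hB2 hL hLe).
  - case: (lerP y0 (3*M)) => hY3.
    + have sw : w*z <= M /\ (w*z = M -> Kc y0 x0 y1 x1).
        case: (lerP (3*x0) 1) => hX13.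
        * exact: (caseII hc hM hM9 hb hb3 ha ha3 (ltac:(lra) : b*a <= M) hy0 hY3 (ltW hX3) hX13 hy1 hx1 hB2s hA1s).
        * exact: (caseIII hc hM hM9 hb hb3 ha ha3 hy0 hY3 (ltW hX13) hy1 hx1 hA2s hLs hLse).
      case: sw => s1 s2; split; first by lra.
      by move=> h; apply: swapK; apply: s2; lra.
    + exact: (caseI hM hM9 ha ha3 hb hb3 hab (ltW hX3) (ltW hY3) hx1 hy1 h00 hA1 hB1).
case: H1 => H1a H1b.
split; first by split.
move=> hap hbp hE.
apply: (Kc_final hM hap ha3 hbp hb3 hab hx0 hx1 hx11 hy0 hy1 hy11 h00 (H1b hE) hE).
Qed.

End RealAll.

Section Comb.
Variable R : realFieldType.
Variable N : nat.
Local Notation T := 'I_N.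

Definition wt (p : T -> R) (x : {set T}) : R :=
  (\prod_(l in x) p l) * \prod_(k in ~: x) (1 - p k).

Lemma pmE (p : T -> R) (U : {set {set T}}) : prod_measure p U = \sum_(x in U) wt p x.
Proof. by []. Qed.

Definition kill (p : T -> R) (l : T) : T -> R := fun j => if j == l then 0 else p j.

Lemma wt_notin (p : T -> R) (l : T) (x : {set T}) : l \notin x -> wt p x = (1 - p l) * wt (kill p l) x.
Proof.
move=> hl; rewrite /wt.
have e1 : \prod_(j in x) kill p l j = \prod_(j in x) p j.
  apply: eq_bigr => j hj; rewrite /kill; case: eqP => // ejl.
  by move: hl; rewrite -ejl hj.
have hlc : l \in ~: x by rewrite in_setC.
have e2 : \prod_(k in ~: x | k != l) (1 - kill p l k) = \prod_(k in ~: x | k != l) (1 - p k).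
  by apply: eq_bigr => k /andP [_ /negbTE hk]; rewrite /kill hk.
rewrite e1 (bigD1 l hlc) /= [in RHS](bigD1 l hlc) /= e2 /kill eqxx subr0 mul1r; ring.
Qed.

Lemma wt_in (p : T -> R) (l : T) (x : {set T}) : l \in x -> wt p x = p l * wt (kill p l) (x :\ l).
Proof.
move=> hl; rewrite /wt.
have e1 : \prod_(j in x :\ l) kill p l j = \prod_(j in x | j != l) p j.
  rewrite (eq_bigl (fun j => (j \in x) && (j != l))); last by move=> j; rewrite in_setD1 andbC.
  by apply: eq_bigr => j /andP [_ /negbTE hj]; rewrite /kill hj.
have hlc : l \in ~: (x :\ l) by rewrite in_setC in_setD1 eqxx.
rewrite e1 (bigD1 l hl) /= [in RHS](bigD1 l hlc) /= /kill eqxx subr0 mul1r.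
have e2 : \prod_(k in ~: (x :\ l) | k != l) (1 - (if k == l then 0 else p k)) =
          \prod_(k in ~: x) (1 - p k).
  rewrite (eq_bigl (fun k => k \in ~: x)); last first.
    move=> k; rewrite !in_setC in_setD1 negb_and negbK.
    case: (eqVneq k l) => [->|hkl]; first by rewrite /= hl.
    by rewrite /= ?andbT.
  by apply: eq_bigr => k; rewrite in_setC => hk; case: eqP => // ekl; move: hk; rewrite ekl hl.
rewrite e2; ring.
Qed.

Lemma decomp (p : T -> R) (l : T) (U : {set {set T}}) :
  prod_measure p U = (1 - p l) * prod_measure (kill p l) [set x in U | l \notin x]
                   + p l * prod_measure (kill p l) [set x :\ l | x in U & l \in x].
Proof.
rewrite !pmE (bigID (fun x : {set T} => l \in x)) /= addrC; congr (_ + _).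
- rewrite big_distrr /=.
  rewrite [in RHS](eq_bigl (fun x => (x \in U) && (l \notin x))); last by move=> x; rewrite inE.
  by apply: eq_bigr => x /andP [_ hx]; rewrite (wt_notin p hx).
- rewrite big_imset /=; last first.
    move=> x y; rewrite !inE => /andP [_ hx] /andP [_ hy] exy.
    by rewrite -(setD1K hx) exy setD1K.
  rewrite big_distrr /=.
  rewrite [in RHS](eq_bigl (fun x => (x \in U) && (l \in x))); last by move=> x; rewrite inE.
  by apply: eq_bigr => x /andP [_ hx]; rewrite (wt_in p hx).
Qed.


Lemma wt_ge0 (p : T -> R) (x : {set T}) : (forall j, 0 <= p j <= 1) -> 0 <= wt p x.
Proof.
move=> hp; rewrite /wt; apply: mulr_ge0; apply: prodr_ge0 => j _; have := hp j; lra.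
Qed.

Lemma wt_zero (p : T -> R) (x : {set T}) j : j \in x -> p j = 0 -> wt p x = 0.
Proof. by move=> hj hpj; rewrite /wt (bigD1 j hj) /= hpj !mul0r. Qed.

Lemma wt_gt0 (p : T -> R) (x : {set T}) : (forall j, j \in x -> 0 < p j) ->
  (forall j, p j < 1) -> 0 < wt p x.
Proof.
move=> h1 h2; rewrite /wt; apply: mulr_gt0; apply: prodr_gt0 => j hj.
  exact: h1.
by have := h2 j; lra.
Qed.

Lemma pm_ge0 (p : T -> R) (U : {set {set T}}) : (forall j, 0 <= p j <= 1) -> 0 <= prod_measure p U.
Proof. by move=> hp; rewrite pmE; apply: sumr_ge0 => x _; apply: wt_ge0. Qed.

Lemma pm_tot (p : T -> R) : \sum_(x : {set T}) wt p x = 1.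
Proof.
have := @bigA_distr R 0 1 *%R +%R T p (fun i => 1 - p i).
have -> : \prod_i (p i + (1 - p i)) = 1 by apply: big1 => i _; ring.
move=> ->; apply: eq_bigr => x _.
rewrite /wt [in RHS](bigID (fun i => i \in x)) /=.
congr (_ * _).
  by apply: eq_bigr => i hi; rewrite hi.
rewrite [in LHS](eq_bigl (fun i => i \notin x)); last by move=> i; rewrite in_setC.
by apply: eq_bigr => i /negbTE ->.
Qed.

Lemma pm_split (p : T -> R) (U : {set {set T}}) :
  prod_measure p U + \sum_(x in ~: U) wt p x = 1.
Proof.
rewrite pmE -(pm_tot p) [in RHS](bigID (fun x => x \in U)) /=.
congr (_ + _); apply: eq_bigl => x //; by rewrite in_setC.
Qed.

Lemma pm_le1 (p : T -> R) (U : {set {set T}}) : (forall j, 0 <= p j <= 1) -> prod_measure p U <= 1.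
Proof.
move=> hp; have := pm_split p U.
have : 0 <= \sum_(x in ~: U) wt p x by apply: sumr_ge0 => x _; apply: wt_ge0.
lra.
Qed.

Lemma pm_zero (p : T -> R) (U : {set {set T}}) : (forall j, 0 <= p j <= 1) -> prod_measure p U = 0 ->
  forall x, x \in U -> wt p x = 0.
Proof.
move=> hp; rewrite pmE => /eqP; rewrite psumr_eq0; last by move=> x _; apply: wt_ge0.
by move=> /allP h x hx; apply/eqP; apply: (implyP (h x (mem_index_enum x))).
Qed.

Lemma pm_one (p : T -> R) (U : {set {set T}}) : (forall j, 0 <= p j <= 1) -> prod_measure p U = 1 ->
  forall x, x \notin U -> wt p x = 0.
Proof.
move=> hp h1 x hx.
have h0 : \sum_(x in ~: U) wt p x = 0 by have := pm_split p U; rewrite h1; lra.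
move/eqP: h0; rewrite psumr_eq0; last by move=> y _; apply: wt_ge0.
move=> /allP h; apply/eqP; have := h x (mem_index_enum x).
by rewrite in_setC hx.
Qed.

Lemma pm_eq_sub (p : T -> R) (U V : {set {set T}}) : (forall j, 0 <= p j <= 1) ->
  (forall x, x \in U -> wt p x != 0 -> x \in V) -> prod_measure p U = prod_measure p V ->
  forall x, x \in V -> wt p x != 0 -> x \in U.
Proof.
move=> hp hUV heq x hxV hwx; apply/negPn/negP => hxU.
have eU : prod_measure p U = \sum_(y in U :&: V) wt p y.
  rewrite pmE (big_setID V) /=.
  have -> : \sum_(y in U :\: V) wt p y = 0.
    apply: big1 => y; rewrite inE => /andP [hyV hyU].
    by apply/eqP; apply: contraNT hyV => hw; apply: hUV.
  by rewrite addr0.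
have eV : prod_measure p V = \sum_(y in U :&: V) wt p y + \sum_(y in V :\: U) wt p y.
  by rewrite pmE (big_setID U) /= setIC.
have h0 : \sum_(y in V :\: U) wt p y = 0 by move: heq; rewrite eU eV; lra.
move/eqP: h0; rewrite psumr_eq0; last by move=> y _; apply: wt_ge0.
move=> /allP h; have := h x (mem_index_enum x).
by rewrite inE hxU hxV /= (negbTE hwx).
Qed.

Lemma wt_base (p : T -> R) (x : {set T}) : (forall j, p j = 0) -> wt p x = (x == set0)%:R.
Proof.
move=> hp; case: (set_0Vmem x) => [->|[j hj]].
  rewrite eqxx /wt big_set0 mul1r; apply: big1 => k _; rewrite hp; ring.
have -> : (x == set0) = false by apply/negbTE/set0Pn; exists j.
exact: wt_zero hj (hp j).
Qed.

Lemma pm_base (p : T -> R) (U : {set {set T}}) : (forall j, p j = 0) -> prod_measure p U = (set0 \in U)%:R.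
Proof.
move=> hp; rewrite pmE.
case hU: (set0 \in U).
- rewrite (bigD1 set0 hU) /= wt_base // eqxx big1 ?addr0 // => x /andP [_ hx].
  by rewrite wt_base // (negbTE hx).
- apply: big1 => x hx; rewrite wt_base //; case: eqP => // ex.
  by move: hU; rewrite -ex hx.
Qed.

End Comb.

Section Main.
Variable R : realFieldType.
Variable N : nat.
Local Notation T := 'I_N.

Definition good (M : R) (S : {set T}) (p1 p2 : T -> R) : Prop :=
  (forall j, j \in S -> [/\ 0 < p1 j, 3 * p1 j <= 1, 0 < p2 j, 3 * p2 j <= 1 & p1 j * p2 j <= M]) /\
  (forall j, j \notin S -> p1 j = 0 /\ p2 j = 0).

Lemma good_sym (M : R) (S : {set T}) (p1 p2 : T -> R) : good M S p1 p2 -> good M S p2 p1.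
Proof.
move=> [h1 h2]; split => j hj; last by have [? ?] := h2 j hj.
by have [? ? ? ? ?] := h1 j hj; split => //; rewrite mulrC.
Qed.

Lemma good_b1 (M : R) (S : {set T}) (p1 p2 : T -> R) : good M S p1 p2 -> forall j, 0 <= p1 j <= 1.
Proof.
move=> [h1 h2] j; case hj: (j \in S).
  by have [? ? ? ? ?] := h1 j hj; apply/andP; split; lra.
by have [-> _] := h2 j (negbT hj); rewrite lexx ler01.
Qed.

Lemma good_lt1 (M : R) (S : {set T}) (p1 p2 : T -> R) : good M S p1 p2 -> forall j, p1 j < 1.
Proof.
move=> [h1 h2] j; case hj: (j \in S).
  by have [? ? ? ? ?] := h1 j hj; lra.
by have [-> _] := h2 j (negbT hj); rewrite ltr01.
Qed.

Lemma good_kill (M : R) (S : {set T}) (p1 p2 : T -> R) (l : T) : good M S p1 p2 ->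
  good M (S :\ l) (kill p1 l) (kill p2 l).
Proof.
move=> [h1 h2]; split => j; rewrite in_setD1 /kill.
  by move=> /andP [/negbTE -> hj]; exact: h1.
case: eqP => [_ _|_ /= hj]; first by split.
exact: h2.
Qed.

Lemma wt_ne0 (M : R) (S : {set T}) (p1 p2 : T -> R) (x : {set T}) : good M S p1 p2 -> (wt p1 x != 0) = (x \subset S).
Proof.
move=> hg; apply/idP/idP.
  move=> hw; apply/subsetP => j hj; apply/negPn/negP => hjS.
  have [e _] := hg.2 j hjS.
  by move: hw; rewrite (wt_zero hj e) eqxx.
move=> hxS; rewrite gt_eqF //; apply: wt_gt0; last exact: good_lt1 hg.
by move=> j hj; have [? ? ? ? ?] := hg.1 j (subsetP hxS j hj).
Qed.

Lemma ci_sub (U1 U2 : {set {set T}}) (l : T) : cross_intersecting U1 U2 ->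
  [/\ cross_intersecting [set x in U1 | l \notin x] [set x in U2 | l \notin x],
      cross_intersecting [set x in U1 | l \notin x] [set x :\ l | x in U2 & l \in x] &
      cross_intersecting [set x :\ l | x in U1 & l \in x] [set x in U2 | l \notin x]].
Proof.
move=> hU; split.
- by move=> x y; rewrite !inE => /andP [hx _] /andP [hy _]; apply: hU.
- move=> x y; rewrite inE => /andP [hx hlx] /imsetP [y' hy' ->].
  move: hy'; rewrite inE => /andP [hy' _].
  have -> : x :&: (y' :\ l) = x :&: y'.
    apply/setP => j; rewrite !inE; case: (eqVneq j l) => [->|] //=.
    by rewrite (negbTE hlx).
  exact: hU.
- move=> x y /imsetP [x' hx' ->]; rewrite inE => /andP [hy hly].
  move: hx'; rewrite inE => /andP [hx' _].
  have -> : (x' :\ l) :&: y = x' :&: y.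
    apply/setP => j; rewrite !inE; case: (eqVneq j l) => [->|] //=.
    by rewrite (negbTE hly) andbF.
  exact: hU.
Qed.

Lemma mem_imD1 (U : {set {set T}}) (l : T) (z : {set T}) : l \in z ->
  (z :\ l \in [set x :\ l | x in U & l \in x]) = (z \in U).
Proof.
move=> hlz; apply/imsetP/idP.
  move=> [x]; rewrite inE => /andP [hx hlx] e.
  by rewrite -(setD1K hlz) e setD1K.
by move=> hz; exists z => //; rewrite inE hz hlz.
Qed.


Definition Claim (M : R) (S : {set T}) (p1 p2 : T -> R) (U1 U2 : {set {set T}}) : Prop :=
  Rg M (prod_measure p1 U1) (prod_measure p2 U2) /\
  (prod_measure p1 U1 * prod_measure p2 U2 = M ->
   exists l, [/\ l \in S, p1 l * p2 l = M &
     forall z : {set T}, z \subset S -> (z \in U1) = (l \in z) /\ (z \in U2) = (l \in z)]).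

Lemma base_case (M : R) (S : {set T}) (p1 p2 : T -> R) (U1 U2 : {set {set T}}) : 0 < M -> 9*M <= 1 -> #|S| = 0 -> good M S p1 p2 ->
  cross_intersecting U1 U2 -> Claim M S p1 p2 U1 U2.
Proof.
move=> hM hM9 hS hg hU.
have S0 : S = set0 by apply/eqP; rewrite -cards_eq0 hS.
have hp1 : forall j, p1 j = 0.
  move=> j; have hj : j \notin S by rewrite S0 inE.
  by have [] := hg.2 j hj.
have hp2 : forall j, p2 j = 0.
  move=> j; have hj : j \notin S by rewrite S0 inE.
  by have [] := hg.2 j hj.
rewrite /Claim (pm_base U1 hp1) (pm_base U2 hp2).
have nb : ~~ ((set0 \in U1) && (set0 \in U2)).
  apply/negP => /andP [h1 h2]; have := hU _ _ h1 h2; by rewrite setI0 eqxx.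
move: nb; case: (set0 \in U1); case: (set0 \in U2) => //= _;
  (split; [rewrite /Rg; split; lra | lra]).
Qed.

Lemma main_ind (M : R) : 0 < M -> 9*M <= 1 -> forall k (S : {set T}) (p1 p2 : T -> R), #|S| = k -> good M S p1 p2 ->
  forall U1 U2 : {set {set T}}, cross_intersecting U1 U2 -> Claim M S p1 p2 U1 U2.
Proof.
move=> hM hM9; elim=> [|k IH] S p1 p2 hS hg U1 U2 hU; first exact: base_case.
have [l hl] : exists l, l \in S.
  apply/set0Pn; rewrite -card_gt0 hS //.
pose S' := S :\ l.
have hS' : #|S'| = k by move: hS; rewrite (cardsD1 l S) hl add1n => -[].
pose q1 := kill p1 l. pose q2 := kill p2 l.
have hg' : good M S' q1 q2 by apply: good_kill.
pose A0 := [set x in U1 | l \notin x]. pose A1 := [set x :\ l | x in U1 & l \in x].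
pose B0 := [set x in U2 | l \notin x]. pose B1 := [set x :\ l | x in U2 & l \in x].
have [c00 c01 c10] := ci_sub l hU.
have [R00 E00] := IH S' q1 q2 hS' hg' A0 B0 c00.
have [R01 _] := IH S' q1 q2 hS' hg' A0 B1 c01.
have [R10 _] := IH S' q1 q2 hS' hg' A1 B0 c10.
have [ha hb3 hb hb4 hab] := hg.1 l hl.
have bq1 := good_b1 hg'. have bq2 := good_b1 (good_sym hg').
have ex : prod_measure p1 U1 = (1 - p1 l) * prod_measure q1 A0 + p1 l * prod_measure q1 A1
  by exact: decomp.
have ey : prod_measure p2 U2 = (1 - p2 l) * prod_measure q2 B0 + p2 l * prod_measure q2 B1
  by exact: decomp.
have [hR hEq] := step hM hM9 (ltW ha) hb3 (ltW hb) hb4 hab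
  (pm_ge0 A0 bq1) (pm_le1 A0 bq1) (pm_ge0 A1 bq1) (pm_le1 A1 bq1)
  (pm_ge0 B0 bq2) (pm_le1 B0 bq2) (pm_ge0 B1 bq2) (pm_le1 B1 bq2) R00 R01 R10.
rewrite /Claim ex ey; split => // hE.
have hlS : forall z : {set T}, z \subset S -> l \notin z -> z \subset S'.
  by move=> z hz hlz; rewrite subsetD1 hz hlz.
have hlS2 : forall z : {set T}, z \subset S -> z :\ l \subset S'.
  by move=> z hz; rewrite /S' setSD.
case: (hEq ha hb hE) => [[e0 [e1 e2]]|[e0 [e1 [e2 [e3 e4]]]]].
-
  have [k0 [hk0 hpk0 hst]] := E00 e2.
  have hk0l : k0 != l by move: hk0; rewrite in_setD1 => /andP [].
  have hk0S : k0 \in S by move: hk0; rewrite in_setD1 => /andP [].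
  have eq1 : q1 k0 = p1 k0 by rewrite /q1 /kill (negbTE hk0l).
  have eq2 : q2 k0 = p2 k0 by rewrite /q2 /kill (negbTE hk0l).
  have k0S' : [set k0] \subset S' by rewrite sub1set.
  have k0A0 : [set k0] \in A0 by rewrite (hst _ k0S').1 set11.
  have k0B0 : [set k0] \in B0 by rewrite (hst _ k0S').2 set11.
  have hA1a : forall z : {set T}, z \subset S' -> z \in A1 -> k0 \in z.
    move=> z hz hzA; have := c10 _ _ hzA k0B0.
    apply: contraR => hk; apply/eqP/setP => j; rewrite !inE.
    by case: (eqVneq j k0) => [->|]; rewrite ?(negbTE hk) ?andbF.
  have hB1a : forall z : {set T}, z \subset S' -> z \in B1 -> k0 \in z.
    move=> z hz hzB; have := c01 _ _ k0A0 hzB.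
    apply: contraR => hk; apply/eqP/setP => j; rewrite !inE.
    by case: (eqVneq j k0) => [->|hj]; rewrite ?(negbTE hk) ?andbF ?(negbTE hj).
  have hA1b : forall z : {set T}, z \subset S' -> k0 \in z -> z \in A1.
    move=> z hz hk.
    have hsub : forall x : {set T}, x \in A1 -> wt q1 x != 0 -> x \in A0.
      move=> x hx hw; rewrite (wt_ne0 _ hg') in hw.
      by rewrite (hst _ hw).1; apply: hA1a.
    apply: (pm_eq_sub bq1 hsub) => //.
      by rewrite (hst _ hz).1.
    by rewrite (wt_ne0 _ hg').
  have hB1b : forall z : {set T}, z \subset S' -> k0 \in z -> z \in B1.
    move=> z hz hk.
    have hsub : forall x : {set T}, x \in B1 -> wt q2 x != 0 -> x \in B0.
      move=> x hx hw; rewrite (wt_ne0 _ (good_sym hg')) in hw.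
      by rewrite (hst _ hw).2; apply: hB1a.
    apply: (pm_eq_sub bq2 hsub) => //.
      by rewrite (hst _ hz).2.
    by rewrite (wt_ne0 _ (good_sym hg')).
  exists k0; split => //; first by rewrite -eq1 -eq2.
  move=> z hz; case hlz: (l \in z).
  + have hz' := hlS2 z hz.
    have ek : (k0 \in z :\ l) = (k0 \in z) by rewrite in_setD1 hk0l.
    rewrite -(mem_imD1 U1 hlz) -(mem_imD1 U2 hlz) -/A1 -/B1 -ek.
    split; apply/idP/idP; [exact: hA1a | exact: hA1b | exact: hB1a | exact: hB1b].
  + have hz' := hlS z hz (negbT hlz).
    have eA : (z \in U1) = (z \in A0) by rewrite inE hlz andbT.
    have eB : (z \in U2) = (z \in B0) by rewrite inE hlz andbT.
    by rewrite eA eB; exact: hst.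
-
  exists l; split => //.
  have hA0 := pm_zero bq1 e0. have hB0 := pm_zero bq2 e1.
  have hA1 := pm_one bq1 e2. have hB1 := pm_one bq2 e3.
  move=> z hz; case hlz: (l \in z).
  + have hz' := hlS2 z hz.
    rewrite -(mem_imD1 U1 hlz) -(mem_imD1 U2 hlz) -/A1 -/B1.
    split; apply/negPn/negP => hn.
      by move: (hA1 _ hn); apply/eqP; rewrite (wt_ne0 _ hg').
    by move: (hB1 _ hn); apply/eqP; rewrite (wt_ne0 _ (good_sym hg')).
  + have hz' := hlS z hz (negbT hlz).
    have eA : (z \in U1) = (z \in A0) by rewrite inE hlz andbT.
    have eB : (z \in U2) = (z \in B0) by rewrite inE hlz andbT.
    rewrite eA eB; split; apply/negP => hn.
      by move: (hA0 _ hn); apply/eqP; rewrite (wt_ne0 _ hg').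
    by move: (hB0 _ hn); apply/eqP; rewrite (wt_ne0 _ (good_sym hg')).
Qed.


Lemma pm_star (p : T -> R) (l : T) : prod_measure p (star l) = p l.
Proof.
rewrite (decomp p l).
have -> : [set x in star l | l \notin x] = set0.
  by apply/setP => x; rewrite !inE; case: (l \in x).
have hV : prod_measure (kill p l) [set x :\ l | x in star l & l \in x] = 1.
  have := pm_split (kill p l) [set x :\ l | x in star l & l \in x].
  have -> : \sum_(x in ~: [set x :\ l | x in star l & l \in x]) wt (kill p l) x = 0.
    apply: big1 => x; rewrite in_setC => hx.
    have hlx : l \in x.
      apply/negPn/negP => hlx; move: hx; apply/negP/negPn.
      apply/imsetP; exists (l |: x); first by rewrite !inE eqxx.
      by rewrite setU1K.
    by apply: (wt_zero hlx); rewrite /kill eqxx.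
  by rewrite addr0.
by rewrite hV pmE big_set0; ring.
Qed.

End Main.

Theorem theorem3 (R : realFieldType) (n : nat) (p1 p2 : 'I_n.+1 -> R)
  (hp1 : prob_vector p1) (hp2 : prob_vector p2)
  (hmax : forall l, p1 l * p2 l <= p1 ord0 * p2 ord0)
  (h13 : forall l, p1 l <= 3^-1 /\ p2 l <= 3^-1)
  (U1 U2 : {set {set 'I_n.+1}}) (hU : cross_intersecting U1 U2) :
  prod_measure p1 U1 * prod_measure p2 U2 <= p1 ord0 * p2 ord0 /\
  (prod_measure p1 U1 * prod_measure p2 U2 = p1 ord0 * p2 ord0 <->
   exists l, p1 l * p2 l = p1 ord0 * p2 ord0 /\ U1 = star l /\ U2 = star l).
Proof.
pose M := p1 ord0 * p2 ord0.
have [h10 h11] := hp1 ord0. have [h20 h21] := hp2 ord0.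
have [h130 h230] := h13 ord0.
have hM : 0 < M by apply: mulr_gt0.
have hM9 : 9*M <= 1.
  have : M <= 3^-1 * 3^-1 by apply: ler_pM; lra.
  lra.
have hg : good M [set: 'I_n.+1] p1 p2.
  split => j; last by rewrite inE.
  move=> _; have [a0 a1] := hp1 j; have [b0 b1] := hp2 j; have [c0 c1] := h13 j.
  split; try lra; exact: hmax.
have [hR hE] := main_ind hM hM9 (erefl _) hg hU.
split; first exact: hR.1.
split.
- move=> e; have [l [_ hl hst]] := hE e.
  exists l; split => //; split; apply/setP => z; rewrite /star inE;
    by have [h1 h2] := hst z (subsetT z); rewrite ?h1 ?h2.
- move=> [l [hl [-> ->]]]; by rewrite !pm_star.
Qed.
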